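(* Let $\mathcal{M}_1=(E_1,\rho_1)$ and $\mathcal{M}_2=(E_2,\rho_2)$ be $q$-matroids and let $\mathcal{M}_1\oplus\mathcal{M}_2$ be their direct sum on $E=E_1\oplus E_2$. Then \[ \mathcal{Z}(\mathcal{M}_1\oplus\mathcal{M}_2)=\{Z_1\oplus Z_2\mid Z_1\in\mathcal{Z}(\mathcal{M}_1),\ Z_2\in\mathcal{Z}(\mathcal{M}_2)\}. \]
   Context: Let $\mathbb{F}=\mathbb{F}_q$ be a finite field. For a finite-dimensional $\mathbb{F}$-vector space $E$, $\mathcal{L}(E)$ is the lattice of its subspaces. A $q$-matroid is a pair $\mathcal{M}=(E,\rho)$ with $\rho:\mathcal{L}(E)\to\mathbb{Z}_{\ge0}$ such that $0\le\rho(V)\le\dim V$, $V\le W\Rightarrow\rho(V)\le\rho(W)$, and $\rho(V+W)+\rho(V\cap W)\le\rho(V)+\rho(W)$ for all $V,W$. A subspace $F$ is a flat if $\rho(F+\langle x\rangle)>\rho(F)$ for all $x\in E\setminus F$. The cyclic core of $V$ is $\mathrm{cyc}(V)=\{x\in V\mid \rho(W)=\rho(V)\text{ for all }W\le V\text{ with }W+\langle x\rangle=V\}$ (a subspace); $V$ is cyclic if $\mathrm{cyc}(V)=V$. $\mathcal{Z}(\mathcal{M})$ denotes the set of cyclic flats (subspaces that are both flats and cyclic). Direct sum: given $q$-matroids $\mathcal{M}_i=(E_i,\rho_i)$, $i=1,2$, let $E=E_1\oplus E_2$ (each $E_i$ identified with its image in $E$) with projections $\pi_i:E\to E_i$; the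 direct sum $\mathcal{M}_1\oplus\mathcal{M}_2=(E,\rho)$ is the $q$-matroid with $\rho(V)=\dim V+\min_{X\le V}\big(\rho_1(\pi_1(X))+\rho_2(\pi_2(X))-\dim X\big)$. *)

(* Defs.v *)
From HB Require Import structures.
From mathcomp Require Import all_boot all_algebra all_field.

Set Implicit Arguments.
Unset Strict Implicit.
Unset Printing Implicit Defensive.

Local Open Scope ring_scope.

Section QMatroid.
Variables (K : fieldType) (E : vectType K).
Implicit Types (V W : {vspace E}) (rho : {vspace E} -> nat).

Definition is_qmatroid rho : Prop :=
  [/\ (forall V, (rho V <= \dim V)%N),
      (forall V W, (V <= W)%VS -> (rho V <= rho W)%N) &
      (forall V W, (rho (V + W)%VS + rho (V :&: W)%VS <= rho V + rho W)%N)].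

Definition is_flat rho (Fl : {vspace E}) : Prop :=
  forall x : E, x \notin Fl -> (rho Fl < rho (Fl + <[x]>)%VS)%N.

Definition in_cyc rho V (x : E) : Prop :=
  x \in V /\
  (forall W, (W <= V)%VS -> (W + <[x]>)%VS = V -> rho W = rho V).

Definition is_cyclic rho V : Prop := forall x : E, x \in V -> in_cyc rho V x.

Definition is_cyclic_flat rho V : Prop := is_flat rho V /\ is_cyclic rho V.

End QMatroid.

(* ---------- enumerating subspaces ----------
   Over a finite field, every subspace X of vT equals mx2vs M (the span of the
   vectors whose coordinate rows are the rows of M) for some square matrix M
   (e.g. M = vs2mx X), and matrices over a finite field form a finite type.
   We use this to take minima over all subspaces. *)
Definition mxspace (F : finFieldType) (vT : vectType F)
    (M : 'M[F]_(dim vT)) : {vspace vT} :=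
  @VectorInternalTheory.mx2vs F vT _ M.

Section DirectSum.
Variables (F : finFieldType) (E1 E2 : vectType F).

Definition proj1v (X : {vspace E1 * E2}) : {vspace E1} :=
  (linfun (@fst E1 E2) @: X)%VS.
Definition proj2v (X : {vspace E1 * E2}) : {vspace E2} :=
  (linfun (@snd E1 E2) @: X)%VS.

Definition dsumv (Z1 : {vspace E1}) (Z2 : {vspace E2}) : {vspace E1 * E2} :=
  ((linfun (@fst E1 E2) @^-1: Z1) :&: (linfun (@snd E1 E2) @^-1: Z2))%VS.

(* rank function of the direct sum:
   rho V = dim V + min_{X <= V} (rho1 (pi1 X) + rho2 (pi2 X) - dim X);
   the quantity inside is computed in nat as dim V + rho1 + rho2 - dim X,
   which is never truncated since dim X <= dim V. *)
Definition dsum_cost (rho1 : {vspace E1} -> nat) (rho2 : {vspace E2} -> nat)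
    (V X : {vspace E1 * E2}) : nat :=
  (\dim V + rho1 (proj1v X) + rho2 (proj2v X) - \dim X)%N.

Definition dsum_rank (rho1 : {vspace E1} -> nat) (rho2 : {vspace E2} -> nat)
    (V : {vspace E1 * E2}) : nat :=
  dsum_cost rho1 rho2 V (mxspace
    [arg min_(M < (0 : 'M[F]_(dim (E1 * E2)%type))
              | (mxspace M <= V)%VS)
       dsum_cost rho1 rho2 V (mxspace M)]).

End DirectSum.

(* Main.v *)
From HB Require Import structures.
From mathcomp Require Import all_boot all_algebra all_field.
From mathcomp Require Import zify.
Require Import Defs.
Import GRing.Theory.

Set Implicit Arguments.
Unset Strict Implicit.
Unset Printing Implicit Defensive.

Section Gen.
Variables (K : fieldType) (vT : vectType K).
Implicit Types (U V W X Y Z : {vspace vT}).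

Lemma dim_strict U V : (U <= V)%VS -> ~~ (V <= U)%VS -> \dim U < \dim V.
Proof.
move=> UV; apply: contraR; rewrite -leqNgt => h.
have /eqP <- : U == V by rewrite eqEdim UV h.
exact: subvv.
Qed.

Lemma not_sub_mem U V (a : vT) : a \in V -> a \notin U -> ~~ (V <= U)%VS.
Proof. by move=> aV; apply: contra => /subvP; apply. Qed.

Lemma dim_cap_le U V : (U <= V)%VS -> \dim U <= \dim V.
Proof. exact: dimvS. Qed.

Lemma hyper Y Z (a : vT) : (Y <= Z)%VS -> a \in Z -> a \notin Y ->
  exists H, [/\ (Y <= H)%VS, (H <= Z)%VS, (H + <[a]>)%VS = Z & (\dim H).+1 <= \dim Z].
Proof.
move=> YZ aZ aY.
set S := (Y + <[a]>)%VS.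
have SZ : (S <= Z)%VS by rewrite subv_add YZ -memvE.
set C := (Z :\: S)%VS.
exists (Y + C)%VS; split.
- exact: addvSl.
- by rewrite subv_add YZ diffvSl.
- apply/eqP; rewrite eqEsubv; apply/andP; split.
    by rewrite subv_add subv_add YZ diffvSl -memvE.
  rewrite -{1}(addv_diff_cap Z S) (capv_idPr SZ) subv_add; apply/andP; split.
    exact: (subv_trans (addvSr Y C) (addvSl _ _)).
  by rewrite subv_add (subv_trans (addvSl Y C) (addvSl _ _)) addvSr.
- have h1 := dimv_cap_compl Z S.
  rewrite (capv_idPr SZ) in h1.
  have h2 : \dim Y < \dim S.
    apply: dim_strict; first exact: addvSl.
    by apply: (not_sub_mem (a:=a)) => //; rewrite memvE addvSr.
  have h3 := dimv_add_leqif Y C.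
  move: h3 => [h3 _]; rewrite /C /S in h1 h2 h3 *; lia.
Qed.

Section Q.
Variables (rho : {vspace vT} -> nat).
Hypothesis Q : is_qmatroid rho.

Lemma rk_dim V : rho V <= \dim V. Proof. by case: Q. Qed.
Lemma rk_mono V W : (V <= W)%VS -> rho V <= rho W. Proof. by case: Q => _ h _; apply: h. Qed.
Lemma rk_sub V W : rho (V + W)%VS + rho (V :&: W)%VS <= rho V + rho W. Proof. by case: Q. Qed.

Lemma rk_unit X W : (X <= W)%VS -> rho W + \dim X <= rho X + \dim W.
Proof.
move=> XW.
have h := rk_sub (W :\: X)%VS X.
have eW : ((W :\: X) + X)%VS = W by rewrite -{2}(capv_idPr XW) addv_diff_cap.
rewrite eW capv_diff in h.
have h0 := rk_dim 0%VS; rewrite dimv0 in h0.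
have h1 := dimv_cap_compl W X; rewrite (capv_idPr XW) in h1.
have h2 := rk_dim (W :\: X)%VS.
lia.
Qed.
End Q.
End Gen.
Section Gain.
Variables (K : fieldType) (vT : vectType K) (rho : {vspace vT} -> nat).
Hypothesis Q : is_qmatroid rho.
Lemma flat_gain (Zf Y P : {vspace vT}) y : is_flat rho Zf -> y \in Y -> y \notin Zf ->
  (P <= Zf)%VS -> (P <= Y)%VS -> rho P < rho Y.
Proof.
move=> fl yY yZ PZ PY.
have h1 := fl y yZ.
have h2 : rho (Zf + <[y]>)%VS <= rho (Zf + Y)%VS.
  by apply: (rk_mono Q); apply: addvS (subvv _) _; rewrite -memvE.
have h3 := rk_sub Q Zf Y.
have h4 : rho P <= rho (Zf :&: Y)%VS by apply: (rk_mono Q); rewrite subv_cap PZ PY.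
lia.
Qed.
End Gain.
Section DS.
Variables (F : finFieldType) (E1 E2 : vectType F).
Local Notation E := (E1 * E2)%type.
Local Notation p1 := (linfun (@fst E1 E2)).
Local Notation p2 := (linfun (@snd E1 E2)).
Implicit Types (A : {vspace E1}) (B : {vspace E2}).

Lemma memD (A : {vspace E1}) (B : {vspace E2}) (u : E) :
  (u \in dsumv A B) = (u.1 \in A) && (u.2 \in B).
Proof. by rewrite memv_cap -!memv_preim !lfunE. Qed.

Lemma mem_proj1 (X : {vspace E}) u : u \in X -> u.1 \in proj1v X.
Proof. by move=> uX; have := memv_img p1 uX; rewrite lfunE. Qed.
Lemma mem_proj2 (X : {vspace E}) u : u \in X -> u.2 \in proj2v X.
Proof. by move=> uX; have := memv_img p2 uX; rewrite lfunE. Qed.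

Lemma proj1P (X : {vspace E}) a : reflect (exists2 u, u \in X & a = u.1) (a \in proj1v X).
Proof.
apply: (iffP memv_imgP) => -[u uX ->]; exists u => //; by rewrite lfunE.
Qed.
Lemma proj2P (X : {vspace E}) a : reflect (exists2 u, u \in X & a = u.2) (a \in proj2v X).
Proof.
apply: (iffP memv_imgP) => -[u uX ->]; exists u => //; by rewrite lfunE.
Qed.

Lemma proj1_sub (X : {vspace E}) A B : (X <= dsumv A B)%VS -> (proj1v X <= A)%VS.
Proof.
move=> /subvP XD; apply/subvP => a /proj1P [u /XD]; rewrite memD => /andP[h _] ->.
exact: h.
Qed.
Lemma proj2_sub (X : {vspace E}) A B : (X <= dsumv A B)%VS -> (proj2v X <= B)%VS.
Proof.
move=> /subvP XD; apply/subvP => a /proj2P [u /XD]; rewrite memD => /andP[_ h] ->.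
exact: h.
Qed.

Lemma sub_dsum_proj (X : {vspace E}) : (X <= dsumv (proj1v X) (proj2v X))%VS.
Proof. by apply/subvP => u uX; rewrite memD mem_proj1 ?mem_proj2. Qed.

Lemma dsumvS A (A' : {vspace E1}) B (B' : {vspace E2}) : (A <= A')%VS -> (B <= B')%VS -> (dsumv A B <= dsumv A' B')%VS.
Proof.
move=> /subvP h1 /subvP h2; apply/subvP => u; rewrite !memD => /andP[a b].
by rewrite h1 ?h2.
Qed.

Lemma proj1_dsum A B : proj1v (dsumv A B) = A.
Proof.
apply/eqP; rewrite eqEsubv (proj1_sub (subvv _)) /=.
apply/subvP => a aA; apply/proj1P; exists (a, 0%R) => //.
by rewrite memD aA mem0v.
Qed.
Lemma proj2_dsum A B : proj2v (dsumv A B) = B.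
Proof.
apply/eqP; rewrite eqEsubv (proj2_sub (subvv _)) /=.
apply/subvP => b bB; apply/proj2P; exists (0%R, b) => //.
by rewrite memD bB mem0v.
Qed.

Lemma dim_dsum A B : \dim (dsumv A B) = (\dim A + \dim B)%N.
Proof.
have h := limg_ker_dim p1 (dsumv A B).
have e1 : (p1 @: dsumv A B)%VS = A by exact: proj1_dsum.
rewrite e1 in h.
have e : \dim (dsumv A B :&: lker p1) = \dim B.
  rewrite -(limg_dim_eq (f := p2)).
    congr (\dim _); apply/eqP; rewrite eqEsubv; apply/andP; split.
      apply/subvP => b /memv_imgP [u]; rewrite memv_cap memD lfunE => /andP[/andP[_ h2] _] ->.
      exact: h2.
    apply/subvP => b bB; apply/memv_imgP; exists (0%R, b); last by rewrite lfunE.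
    by rewrite memv_cap memD memv_ker lfunE bB mem0v /=.
  apply/eqP; rewrite -subv0; apply/subvP => u.
  rewrite !memv_cap !memv_ker !lfunE => /andP[/andP[_ /eqP h1] /eqP h2].
  by rewrite memv0; case: u h1 h2 => /= u1 u2 -> ->.
by rewrite -h e addnC.
Qed.
End DS.
Section Rank.
Variables (F : finFieldType) (E1 E2 : vectType F).
Variables (rho1 : {vspace E1} -> nat) (rho2 : {vspace E2} -> nat).
Hypotheses (Q1 : is_qmatroid rho1) (Q2 : is_qmatroid rho2).
Local Notation E := (E1 * E2)%type.
Local Notation rho := (dsum_rank rho1 rho2).
Local Notation cost := (dsum_cost rho1 rho2).
Implicit Types (A : {vspace E1}) (B : {vspace E2}) (V W X Z : {vspace E}).

Lemma costE V X : (X <= V)%VS ->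
  cost V X + \dim X = \dim V + rho1 (proj1v X) + rho2 (proj2v X).
Proof. move=> XV; have := dimvS XV; rewrite /dsum_cost; lia. Qed.

Lemma mx0 : mxspace (0 : 'M[F]_(dim E))%R = 0%VS.
Proof.
apply/eqP; rewrite -dimv_eq0 /dimv /mxspace.
by rewrite VectorInternalTheory.mx2vsK mxrank0.
Qed.

Lemma rk_le V X : (X <= V)%VS -> rho V <= cost V X.
Proof.
move=> XV; rewrite /dsum_rank; case: arg_minnP => [|M _ Hmin].
  by rewrite mx0 sub0v.
have := Hmin (VectorInternalTheory.vs2mx X).
by rewrite /mxspace VectorInternalTheory.vs2mxK; apply.
Qed.

Lemma rk_ex V : exists2 X, (X <= V)%VS & rho V = cost V X.
Proof.
rewrite /dsum_rank; case: arg_minnP => [|M HM _]; first by rewrite mx0 sub0v.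
by exists (mxspace M).
Qed.

Lemma rk_upper V : rho V <= rho1 (proj1v V) + rho2 (proj2v V).
Proof. have := rk_le (subvv V); have := costE (subvv V); lia. Qed.

Lemma rk_monoD W V : (W <= V)%VS -> rho W <= rho V.
Proof.
move=> WV; have [X XV e] := rk_ex V.
have XWW : (X :&: W <= W)%VS by exact: capvSr.
have h := rk_le XWW; have h1 := costE XWW; have h2 := costE XV.
have h3 := dimv_sum_cap X W.
have h4 : \dim (X + W) <= \dim V by apply: dimvS; rewrite subv_add XV WV.
have h5 := rk_mono Q1 (limgS (linfun (@fst E1 E2)) (capvSl X W)).
have h6 := rk_mono Q2 (limgS (linfun (@snd E1 E2)) (capvSl X W)).
rewrite /proj1v /proj2v in h1 h2.
lia.
Qed.

Lemma rk_dsum A B : rho (dsumv A B) = rho1 A + rho2 B.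
Proof.
apply/eqP; rewrite eqn_leq; apply/andP; split.
  by have := rk_upper (dsumv A B); rewrite proj1_dsum proj2_dsum.
have [X XV ->] := rk_ex (dsumv A B).
have h := costE XV.
have h1 := rk_unit Q1 (proj1_sub XV); have h2 := rk_unit Q2 (proj2_sub XV).
have h3 := dimvS (sub_dsum_proj X); rewrite dim_dsum in h3.
have h4 := dim_dsum A B.
lia.
Qed.
Lemma dsum_flat (Z1 : {vspace E1}) (Z2 : {vspace E2}) : is_flat rho1 Z1 -> is_flat rho2 Z2 -> is_flat rho (dsumv Z1 Z2).
Proof.
move=> f1 f2 x xZ.
have [X XV ->] := rk_ex (dsumv Z1 Z2 + <[x]>).
rewrite rk_dsum.
have hV : \dim (dsumv Z1 Z2) < \dim (dsumv Z1 Z2 + <[x]>).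
  apply: dim_strict; first exact: addvSl.
  by apply: (not_sub_mem (a := x)) => //; rewrite memvE addvSr.
have hV2 : \dim (dsumv Z1 Z2 + <[x]>) <= \dim (dsumv Z1 Z2) + 1.
  have [h _] := dimv_add_leqif (dsumv Z1 Z2) <[x]>.
  rewrite dim_vline in h; have := leq_b1 (x != 0%R); lia.
have cV := costE XV.
case: (boolP (X <= dsumv Z1 Z2)%VS) => XZ.
  have h1 := rk_le XZ; rewrite rk_dsum in h1.
  have := costE XZ; lia.
have X'Z : (X :&: dsumv Z1 Z2 <= dsumv Z1 Z2)%VS by exact: capvSr.
have h1 := rk_le X'Z; rewrite rk_dsum in h1.
have c' := costE X'Z.
have hd := dimv_sum_cap X (dsumv Z1 Z2).
have hd2 : \dim (X + dsumv Z1 Z2) <= \dim (dsumv Z1 Z2 + <[x]>).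
  by apply: dimvS; rewrite subv_add XV addvSl.
have m1 := rk_mono Q1 (limgS (linfun (@fst E1 E2)) (capvSl X (dsumv Z1 Z2))).
have m2 := rk_mono Q2 (limgS (linfun (@snd E1 E2)) (capvSl X (dsumv Z1 Z2))).
rewrite /proj1v /proj2v in c' cV.
have [y yX] := subvPn XZ; rewrite memD negb_and => /orP[] ny.
  have g := flat_gain Q1 f1 (mem_proj1 yX) ny (proj1_sub X'Z) (limgS _ (capvSl _ _)).
  rewrite /proj1v in g; lia.
have g := flat_gain Q2 f2 (mem_proj2 yX) ny (proj2_sub X'Z) (limgS _ (capvSl _ _)).
rewrite /proj2v in g; lia.
Qed.
Lemma dsum_cyclic (Z1 : {vspace E1}) (Z2 : {vspace E2}) :
  is_cyclic rho1 Z1 -> is_cyclic rho2 Z2 -> is_cyclic rho (dsumv Z1 Z2).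
Proof.
move=> c1 c2 x xZ; split => // W WZ eW.
apply/eqP; rewrite eqn_leq rk_monoD //=.
case: (boolP (dsumv Z1 Z2 <= W)%VS) => ZW.
  by have -> : W = dsumv Z1 Z2 by apply/eqP; rewrite eqEsubv WZ ZW.
have [X XW ->] := rk_ex W; rewrite rk_dsum.
have dZW : \dim (dsumv Z1 Z2) <= \dim W + 1.
  rewrite -eW; have [h _] := dimv_add_leqif W <[x]>.
  rewrite dim_vline in h; have := leq_b1 (x != 0%R); lia.
have XU := sub_dsum_proj X.
have hY1 : (proj1v X <= Z1)%VS by apply: proj1_sub (subv_trans XW WZ).
have hY2 : (proj2v X <= Z2)%VS by apply: proj2_sub (subv_trans XW WZ).
have cW := costE XW.
have dz := dim_dsum Z1 Z2.
have dU := dim_dsum (proj1v X) (proj2v X).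
have u1 := rk_unit Q1 hY1; have u2 := rk_unit Q2 hY2.
case: (boolP (dsumv (proj1v X) (proj2v X) <= W)%VS) => UW.
  have dXU := dimvS XU.
  have : ~~ (Z1 <= proj1v X)%VS || ~~ (Z2 <= proj2v X)%VS.
    rewrite -negb_and; apply: contra ZW => /andP[a b].
    exact: subv_trans (dsumvS a b) UW.
  case/orP => /subvPn [a aZ aY].
    have [H [YH HZ eH dH]] := hyper hY1 aZ aY.
    have [_ e] := c1 a aZ; have {}e := e H HZ eH.
    have := rk_unit Q1 YH; lia.
  have [H [YH HZ eH dH]] := hyper hY2 aZ aY.
  have [_ e] := c2 a aZ; have {}e := e H HZ eH.
  have := rk_unit Q2 YH; lia.
have h1 : \dim X <= \dim (W :&: dsumv (proj1v X) (proj2v X)) by apply: dimvS; rewrite subv_cap XW XU.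
have h2 : \dim (W :&: dsumv (proj1v X) (proj2v X)) < \dim (dsumv (proj1v X) (proj2v X)).
  apply: dim_strict; first exact: capvSr.
  by apply: contra UW => h; apply: subv_trans h (capvSl _ _).
lia.
Qed.
Lemma cf_rank Z : is_cyclic rho Z -> rho Z = rho1 (proj1v Z) + rho2 (proj2v Z).
Proof.
move=> cZ; apply/eqP; rewrite eqn_leq rk_upper /=.
have [X XZ e] := rk_ex Z.
have cX := costE XZ.
case: (boolP (Z <= X)%VS) => ZX.
  have eX : X = Z by apply/eqP; rewrite eqEsubv XZ ZX.
  rewrite e; rewrite eX in cX *; lia.
have [z zZ zX] := subvPn ZX.
have [H [XH HZ eH dH]] := hyper XZ zZ zX.
have [_ eh] := cZ z zZ; have {}eh := eh H HZ eH.
have h := rk_le XH; have := costE XH; lia.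
Qed.

Lemma cf_split Z : is_cyclic_flat rho Z -> Z = dsumv (proj1v Z) (proj2v Z).
Proof.
move=> [fZ cZ]; have eZ := cf_rank cZ.
apply/eqP; rewrite eqEsubv sub_dsum_proj /=; apply/negPn/negP => /subvPn [x xD xZ].
have h := fZ x xZ.
have h2 : rho (Z + <[x]>)%VS <= rho (dsumv (proj1v Z) (proj2v Z)).
  by apply: rk_monoD; rewrite subv_add sub_dsum_proj -memvE.
rewrite rk_dsum in h2; lia.
Qed.

Lemma cf_flat1 Z : is_cyclic_flat rho Z -> is_flat rho1 (proj1v Z).
Proof.
move=> cfZ a na; have eZ := cf_rank cfZ.2.
have xZ : (a, 0%R) \notin Z by apply: contra na => h; have := mem_proj1 h.
have h := cfZ.1 _ xZ.
have h2 := rk_upper (Z + <[(a, 0%R)]>)%VS.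
rewrite /proj1v /proj2v !limgD !limg_line !lfunE /= in h2.
move: h2; set t2 := rho2 _ => h2.
have h3 : t2 <= rho2 (proj2v Z).
  by rewrite /t2; apply: (rk_mono Q2); rewrite subv_add subvv -memvE mem0v.
have h4 : rho Z < rho1 (linfun (@fst E1 E2) @: Z + <[a]>)%VS + rho2 (proj2v Z).
  by apply: (leq_trans h); apply: (leq_trans h2); rewrite leq_add2l.
by rewrite eZ ltn_add2r in h4.
Qed.

Lemma cf_flat2 Z : is_cyclic_flat rho Z -> is_flat rho2 (proj2v Z).
Proof.
move=> cfZ a na; have eZ := cf_rank cfZ.2.
have xZ : (0%R, a) \notin Z by apply: contra na => h; have := mem_proj2 h.
have h := cfZ.1 _ xZ.
have h2 := rk_upper (Z + <[(0%R, a)]>)%VS.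
rewrite /proj1v /proj2v !limgD !limg_line !lfunE /= in h2.
move: h2; set t1 := rho1 _ => h2.
have h3 : t1 <= rho1 (proj1v Z).
  by rewrite /t1; apply: (rk_mono Q1); rewrite subv_add subvv -memvE mem0v.
have h4 : rho Z < rho1 (proj1v Z) + rho2 (linfun (@snd E1 E2) @: Z + <[a]>)%VS.
  by apply: (leq_trans h); apply: (leq_trans h2); rewrite leq_add2r.
by rewrite eZ ltn_add2l in h4.
Qed.

Lemma pair_ext (u v : E) : u.1 = v.1 -> u.2 = v.2 -> u = v.
Proof. by case: u v => [? ?] [? ?] /= -> ->. Qed.

Lemma cf_cyc1 Z : is_cyclic_flat rho Z -> is_cyclic rho1 (proj1v Z).
Proof.
move=> cfZ a aZ; split => // W1 W1Z eW1.
have eZ := cf_split cfZ.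
set Z1 := proj1v Z in aZ W1Z eW1 eZ *; set Z2 := proj2v Z in eZ *.
have xZ : (a, 0%R) \in Z by rewrite eZ memD aZ mem0v.
have WZ : (dsumv W1 Z2 <= Z)%VS by rewrite eZ dsumvS.
have eW : (dsumv W1 Z2 + <[(a, 0%R)]>)%VS = Z.
  apply/eqP; rewrite eqEsubv subv_add WZ -memvE xZ /=.
  rewrite {1}eZ; apply/subvP => u; rewrite memD => /andP[u1 u2].
  rewrite -eW1 in u1; case/memv_addP: u1 => w wW1 [v /vlineP[k ->] e].
  apply/memv_addP; exists (w, u.2); first by rewrite memD wW1 u2.
  exists (k *: (a, 0%R))%R; first exact: memvZ (memv_line _).
  by apply: pair_ext => /=; rewrite ?e // scaler0 addr0.
have [_ h] := cfZ.2 _ xZ; have {}h := h _ WZ eW.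
move: h; rewrite {1}eZ !rk_dsum; lia.
Qed.

Lemma cf_cyc2 Z : is_cyclic_flat rho Z -> is_cyclic rho2 (proj2v Z).
Proof.
move=> cfZ a aZ; split => // W2 W2Z eW2.
have eZ := cf_split cfZ.
set Z2 := proj2v Z in aZ W2Z eW2 eZ *; set Z1 := proj1v Z in eZ *.
have xZ : (0%R, a) \in Z by rewrite eZ memD aZ mem0v.
have WZ : (dsumv Z1 W2 <= Z)%VS by rewrite eZ dsumvS.
have eW : (dsumv Z1 W2 + <[(0%R, a)]>)%VS = Z.
  apply/eqP; rewrite eqEsubv subv_add WZ -memvE xZ /=.
  rewrite {1}eZ; apply/subvP => u; rewrite memD => /andP[u1 u2].
  rewrite -eW2 in u2; case/memv_addP: u2 => w wW2 [v /vlineP[k ->] e].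
  apply/memv_addP; exists (u.1, w); first by rewrite memD wW2 u1.
  exists (k *: (0%R, a))%R; first exact: memvZ (memv_line _).
  by apply: pair_ext => /=; rewrite ?e // scaler0 addr0.
have [_ h] := cfZ.2 _ xZ; have {}h := h _ WZ eW.
move: h; rewrite {1}eZ !rk_dsum; lia.
Qed.

End Rank.

Theorem theorem6p2 (F : finFieldType) (E1 E2 : vectType F)
    (rho1 : {vspace E1} -> nat) (rho2 : {vspace E2} -> nat) :
  is_qmatroid rho1 -> is_qmatroid rho2 ->
  forall Z : {vspace E1 * E2},
    is_cyclic_flat (dsum_rank rho1 rho2) Z <->
    exists (Z1 : {vspace E1}) (Z2 : {vspace E2}),
      [/\ is_cyclic_flat rho1 Z1, is_cyclic_flat rho2 Z2 & Z = dsumv Z1 Z2].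
Proof.
move=> Q1 Q2 Z; split.
  move=> cfZ; exists (proj1v Z), (proj2v Z); split.
  - split; [move: (cf_flat1 Q2 cfZ) | move: (cf_cyc1 Q1 Q2 cfZ)]; by [].
  - split; [move: (cf_flat2 Q1 cfZ) | move: (cf_cyc2 Q1 Q2 cfZ)]; by [].
  - exact: (cf_split Q1 Q2 cfZ).
move=> [Z1 [Z2 [[f1 c1] [f2 c2] ->]]]; split.
  exact: (dsum_flat Q1 Q2 f1 f2).
exact: (dsum_cyclic Q1 Q2 c1 c2).
Qed.
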